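(* Let $N\ge2$ and let $H\in M_{(N-1)\times N}(\mathbb T)$ be partial Hadamard, with rows $R_1,\ldots,R_{N-1}\in\mathbb T^N$ and columns $C_1,\ldots,C_N\in\mathbb T^{N-1}$. Let $Z\in\mathbb C^N$ be a nonzero vector with $\mathrm{span}(R_1,\ldots,R_{N-1})^\perp=\mathbb CZ$. The following are equivalent: (1) the submagic matrix $(P_{ij})_{i,j=1}^{N-1}$, $P_{ij}=\mathrm{Proj}(R_i/R_j)\in M_N(\mathbb C)$, can be completed to an $N\times N$ magic matrix with entries in $M_N(\mathbb C)$; (2) with $G\in M_N(\mathbb C)$, $G_{kl}=\frac1N|\langle C_k,C_l\rangle|^2$, the matrix $G-(N-2)1_N$ is a projection; (3) $HDH^*=c\,1_{N-1}$ for some scalar $c$, where $D=\mathrm{diag}(|Z_1|^2,\ldots,|Z_N|^2)$.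
   Context: $\mathbb T$ is the unit circle; a partial Hadamard matrix has entries in $\mathbb T$ and pairwise orthogonal rows. $R_i/R_j$ is entrywise division; $\mathrm{Proj}(\xi)$ is the orthogonal projection onto $\mathbb C\xi$; $\langle x,y\rangle=\sum_l x_l\overline{y_l}$. A submagic matrix is a square matrix of orthogonal projections, pairwise orthogonal within each row and each column; it is magic if moreover each row and each column sums to $1$; a completion is a magic matrix whose upper-left $(N-1)\times(N-1)$ block is the given one. *)

(* Defs.v *)
From mathcomp Require Import all_boot all_algebra.
From mathcomp Require Import complex.
From mathcomp Require Import reals.
Set Implicit Arguments. Unset Strict Implicit. Unset Printing Implicit Defensive.
Import GRing.Theory Num.Theory.
Local Open Scope ring_scope.

Section Defs.
Variable C : numClosedFieldType.

Definition rdot n (x y : 'rV[C]_n) : C := \sum_(l < n) x 0 l * (y 0 l)^*.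

Definition adj m n (A : 'M[C]_(m, n)) : 'M[C]_(n, m) := \matrix_(i, j) (A j i)^*.

Definition is_oproj n (P : 'M[C]_n) : Prop := P *m P = P /\ adj P = P.

Definition Proj n (xi : 'rV[C]_n) : 'M[C]_n :=
  (rdot xi xi)^-1 *: \matrix_(k, l) (xi 0 k * (xi 0 l)^*).

Definition rdiv n (x y : 'rV[C]_n) : 'rV[C]_n := \row_l (x 0 l / y 0 l).

Definition partial_hadamard m n (H : 'M[C]_(m, n)) : Prop :=
  (forall i j, `|H i j| = 1) /\
  (forall i j : 'I_m, i != j -> rdot (row i H) (row j H) = 0).

Definition submagic m n (P : 'I_m -> 'I_m -> 'M[C]_n) : Prop :=
  (forall i j, is_oproj (P i j)) /\
  (forall i j k, j != k -> P i j *m P i k = 0) /\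
  (forall i j k, i != k -> P i j *m P k j = 0).

Definition magic m n (P : 'I_m -> 'I_m -> 'M[C]_n) : Prop :=
  submagic P /\
  (forall i, \sum_j P i j = 1%:M) /\
  (forall j, \sum_i P i j = 1%:M).

End Defs.

(* Main.v *)
Require Import Defs.
From mathcomp Require Import all_boot all_algebra.
From mathcomp Require Import complex.
From mathcomp Require Import reals.
From mathcomp Require Import ring.
Import GRing.Theory Num.Theory.
Local Open Scope ring_scope.

Section Gen.
Variable C : numClosedFieldType.
Variable m : nat.
Variable K : 'I_m -> 'rV[C]_m.
Hypothesis hm : m%:R != 0 :> C.
Hypothesis F1 : forall i l, K i 0 l * (K i 0 l)^* = 1.
Hypothesis F2 : forall i j, i != j -> rdot (K i) (K j) = 0.
Hypothesis F3 : forall k l, \sum_i (K i 0 k)^* * K i 0 l = (k==l)%:R * m%:R.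

Lemma F1' i l : (K i 0 l)^* * K i 0 l = 1.
Proof. by rewrite mulrC F1. Qed.

Lemma invK i l : (K i 0 l)^-1 = (K i 0 l)^*.
Proof.
have nz : K i 0 l != 0.
  by apply/eqP=> h; move: (F1 i l); rewrite h mul0r => /eqP; rewrite eq_sym oner_eq0.
by rewrite -[RHS](mulKf nz) F1 mulr1.
Qed.

Definition im : C := (m%:R)^-1.
Lemma imK : im * m%:R = 1. Proof. by rewrite mulVf. Qed.

Definition PK i j : 'M[C]_m := Proj (rdiv (K i) (K j)).

Lemma ProjK i j : PK i j = \matrix_(k,l) (im * (K i 0 k * (K j 0 k)^* * ((K i 0 l)^* * K j 0 l))).
Proof.
rewrite /PK /Proj /im.
have -> : rdot (rdiv (K i) (K j)) (rdiv (K i) (K j)) = m%:R.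
  rewrite /rdot (eq_bigr (fun _ => 1)); last first.
    move=> k _; rewrite !mxE invK !rmorphM /= conjCK.
    transitivity ((K i 0 k * (K i 0 k)^*) * ((K j 0 k)^* * K j 0 k)); first ring.
    by rewrite F1 F1' mulr1.
  by rewrite sumr_const card_ord.
apply/matrixP=> k l; rewrite !mxE !invK !rmorphM /= conjCK.
by [].
Qed.

Lemma PK_oproj i j : is_oproj (PK i j).
Proof.
split.
  apply/matrixP=> k l; rewrite ProjK !mxE.
  rewrite (eq_bigr (fun p => (im * (K i 0 k * (K j 0 k)^* * ((K i 0 l)^* * K j 0 l))) * im)).
    by rewrite sumr_const card_ord -[X in X = _]mulr_natr -mulrA imK mulr1.
  move=> p _; rewrite !mxE.
  transitivity (im * (K i 0 k * (K j 0 k)^* * ((K i 0 l)^* * K j 0 l)) * im *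
     (((K i 0 p)^* * K i 0 p) * (K j 0 p * (K j 0 p)^*))); first ring.
  by rewrite F1 F1' !mulr1.
apply/matrixP=> k l; rewrite /adj ProjK !mxE !rmorphM /= !conjCK /im fmorphV /= conjC_nat -/im.
ring.
Qed.

Lemma PK_row i j k : j != k -> PK i j *m PK i k = 0.
Proof.
move=> jk; apply/matrixP=> a b; rewrite !ProjK !mxE.
rewrite (eq_bigr (fun p => (im * im * (K i 0 a * (K j 0 a)^* * ((K i 0 b)^* * K k 0 b))) * (K j 0 p * (K k 0 p)^*))).
  by rewrite -mulr_sumr -/(rdot (K j) (K k)) F2 // mulr0.
move=> p _; rewrite !mxE.
transitivity (im * im * (K i 0 a * (K j 0 a)^* * ((K i 0 b)^* * K k 0 b)) * (K j 0 p * (K k 0 p)^*) *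
     ((K i 0 p)^* * K i 0 p)); first ring.
by rewrite F1' !mulr1.
Qed.

Lemma PK_col i j k : i != k -> PK i j *m PK k j = 0.
Proof.
move=> ik; apply/matrixP=> a b; rewrite !ProjK !mxE.
rewrite (eq_bigr (fun p => (im * im * (K i 0 a * (K j 0 a)^* * ((K k 0 b)^* * K j 0 b))) * (K k 0 p * (K i 0 p)^*))).
  by rewrite -mulr_sumr -/(rdot (K k) (K i)) F2 1?eq_sym // mulr0.
move=> p _; rewrite !mxE.
transitivity (im * im * (K i 0 a * (K j 0 a)^* * ((K k 0 b)^* * K j 0 b)) * (K k 0 p * (K i 0 p)^*) *
     (K j 0 p * (K j 0 p)^*)); first ring.
by rewrite F1 !mulr1.
Qed.

Lemma PK_rowsum i : \sum_j PK i j = 1%:M.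
Proof.
apply/matrixP=> k l; rewrite summxE.
rewrite (eq_bigr (fun j => (im * (K i 0 k * (K i 0 l)^*)) * ((K j 0 k)^* * K j 0 l))).
  rewrite -mulr_sumr F3 !mxE; case: eqP => [->|_]; last by rewrite !mul0r mulr0.
  by rewrite F1 mul1r mulr1 imK.
move=> j _; rewrite ProjK mxE; ring.
Qed.

Lemma PK_colsum j : \sum_i PK i j = 1%:M.
Proof.
apply/matrixP=> k l; rewrite summxE.
rewrite (eq_bigr (fun i => (im * ((K j 0 k)^* * K j 0 l)) * ((K i 0 k)^* * K i 0 l)^*)).
  rewrite -mulr_sumr -rmorph_sum F3 rmorphM /= conjC_nat !mxE.
  case: eqP => [->|_]; last by rewrite rmorph0 !mul0r mulr0.
  by rewrite rmorph1 F1' mul1r mulr1 conjC_nat imK.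
move=> i _; rewrite ProjK mxE rmorphM /= conjCK; ring.
Qed.

Lemma PK_magic : magic PK.
Proof.
split; last by split; [exact: PK_rowsum | exact: PK_colsum].
split; first exact: PK_oproj.
by split; [exact: PK_row | exact: PK_col].
Qed.
End Gen.
Section Rdot.
Variable C : numClosedFieldType.
Variable n : nat.
Implicit Types x y z : 'rV[C]_n.

Lemma rdotDl x y z : rdot (x + y) z = rdot x z + rdot y z.
Proof. by rewrite /rdot -big_split; apply: eq_bigr => l _; rewrite mxE mulrDl. Qed.
Lemma rdotBl x y z : rdot (x - y) z = rdot x z - rdot y z.
Proof. by rewrite /rdot -sumrB; apply: eq_bigr => l _; rewrite !mxE mulrBl. Qed.
Lemma rdotZl a x z : rdot (a *: x) z = a * rdot x z.
Proof. by rewrite /rdot mulr_sumr; apply: eq_bigr => l _; rewrite mxE mulrA. Qed.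
Lemma rdotDr x y z : rdot z (x + y) = rdot z x + rdot z y.
Proof. by rewrite /rdot -big_split; apply: eq_bigr => l _; rewrite mxE rmorphD mulrDr. Qed.
Lemma rdotBr x y z : rdot z (x - y) = rdot z x - rdot z y.
Proof. by rewrite /rdot -sumrB; apply: eq_bigr => l _; rewrite !mxE rmorphB mulrBr. Qed.
Lemma rdotZr a x z : rdot z (a *: x) = a^* * rdot z x.
Proof.
rewrite /rdot mulr_sumr; apply: eq_bigr => l _; rewrite mxE rmorphM /=.
by rewrite mulrCA.
Qed.
Lemma rdot_suml p (f : 'I_p -> 'rV[C]_n) z : rdot (\sum_i f i) z = \sum_i rdot (f i) z.
Proof.
rewrite /rdot; under eq_bigr => l _ do rewrite summxE mulr_suml.
exact: exchange_big.
Qed.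
Lemma rdot_sumr p (f : 'I_p -> 'rV[C]_n) z : rdot z (\sum_i f i) = \sum_i rdot z (f i).
Proof.
rewrite /rdot; under eq_bigr => l _ do rewrite summxE rmorph_sum mulr_sumr.
exact: exchange_big.
Qed.
Lemma rdotC x y : rdot y x = (rdot x y)^*.
Proof.
rewrite /rdot rmorph_sum; apply: eq_bigr => l _.
by rewrite rmorphM /= conjCK mulrC.
Qed.
Lemma rdot_delta k y : rdot (delta_mx 0 k) y = (y 0 k)^*.
Proof.
rewrite /rdot (bigD1 k) //= big1 ?addr0; first by rewrite mxE !eqxx mul1r.
by move=> l lk; rewrite mxE (negPf lk) andbF mul0r.
Qed.
Lemma rdot_self_eq0 x : rdot x x = 0 -> x = 0.
Proof.
move=> h; apply/rowP=> l; rewrite mxE.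
apply/eqP; rewrite -mul_conjC_eq0; apply/eqP.
by apply: (psumr_eq0P (fun i _ => mul_conjC_ge0 _) h).
Qed.
End Rdot.

Lemma aux1 (C : numClosedFieldType) (q a b c d z : C) :
  (q * (0 - a * b * z)) * (q * (0 - c * d * z)) = q^+2 * ((c * a) * (b * d)) * z^+2.
Proof. ring. Qed.

Section Compl.
Variable C : numClosedFieldType.
Variables p q : nat.
Variable H : 'M[C]_(p, q).
Variable Z : 'rV[C]_q.
Hypothesis hpq : q = p.+1.
Hypothesis hq : q%:R != 0 :> C.
Hypothesis hU : forall i j, `|H i j| = 1.
Hypothesis hO : forall i j : 'I_p, i != j -> rdot (row i H) (row j H) = 0.
Hypothesis Zn0 : Z != 0.
Hypothesis hZ : forall v : 'rV[C]_q,
     (forall w : 'rV[C]_q, (w <= H)%MS -> rdot w v = 0) <->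
     exists c : C, v = c *: Z.

Lemma HU i l : H i l * (H i l)^* = 1.
Proof. by rewrite -normCK hU expr1n. Qed.
Lemma HU' i l : (H i l)^* * H i l = 1.
Proof. by rewrite mulrC HU. Qed.

Lemma rdotRR i j : rdot (row i H) (row j H) = (i == j)%:R * q%:R.
Proof.
case: eqP => [->|/eqP ij]; last by rewrite hO // mul0r.
rewrite mul1r /rdot (eq_bigr (fun _ => 1)) ?sumr_const ?card_ord //.
by move=> l _; rewrite !mxE HU.
Qed.

Definition ZZ := rdot Z Z.
Lemma ZZ0 : ZZ != 0.
Proof. by apply/eqP=> /rdot_self_eq0 h; move: Zn0; rewrite h eqxx. Qed.

Lemma rdotRZ i : rdot (row i H) Z = 0.
Proof.
have [_ h] := hZ Z.
apply: h; first by exists 1; rewrite scale1r.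
exact: row_sub.
Qed.

Lemma compl v : v = \sum_i (rdot v (row i H) / q%:R) *: row i H + (rdot v Z / ZZ) *: Z.
Proof.
pose w := v - (\sum_i (rdot v (row i H) / q%:R) *: row i H + (rdot v Z / ZZ) *: Z).
suff : w = 0 by move/eqP; rewrite subr_eq0 => /eqP.
have hw : forall j, rdot (row j H) w = 0.
  move=> j; rewrite /w rdotBr rdotDr rdot_sumr rdotZr rdotRZ mulr0 addr0.
  rewrite (bigD1 j) //= big1 ?addr0; last first.
    by move=> i ij; rewrite rdotZr rdotRR eq_sym (negPf ij) mul0r mulr0.
  rewrite rdotZr rdotRR eqxx mul1r rmorphM /= fmorphV /= conjC_nat -rdotC.
  by rewrite mulrAC mulfK ?subrr.
have [h _] := hZ w.
have [c wc] : exists c : C, w = c *: Z.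
  apply: h => w' /submxP [x ->].
  rewrite mulmx_sum_row rdot_suml big1 // => i _.
  by rewrite rdotZl hw mulr0.
have : rdot w Z = 0.
  rewrite /w rdotBl rdotDl rdot_suml big1 ?add0r; last first.
    by move=> i _; rewrite rdotZl rdotRZ mulr0.
  by rewrite rdotZl -/ZZ divfK ?subrr // ZZ0.
move=> h0; have : c * ZZ = 0 by rewrite -rdotZl -wc.
move/eqP; rewrite mulf_eq0 (negPf ZZ0) orbF => /eqP c0.
by rewrite wc c0 scale0r.
Qed.

Lemma complE k l : (k == l)%:R = \sum_i (H i k)^* * H i l / q%:R + (Z 0 k)^* * Z 0 l / ZZ.
Proof.
rewrite eq_sym; have := congr1 (fun M : 'rV_q => M 0 l) (compl (delta_mx 0 k)).
rewrite /= !mxE summxE eqxx /= => ->.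
rewrite rdot_delta; congr (_ + _); last by rewrite mulrAC.
by apply: eq_bigr => i _; rewrite !mxE rdot_delta mxE mulrAC.
Qed.

Lemma Zabs k : (Z 0 k)^* * Z 0 k = ZZ / q%:R.
Proof.
have := complE k k; rewrite eqxx.
rewrite (eq_bigr (fun _ => q%:R^-1)); last by move=> i _; rewrite HU' mul1r.
rewrite sumr_const card_ord => h.
have h' : (Z 0 k)^* * Z 0 k / ZZ = 1 - q%:R^-1 *+ p.
  by apply/eqP; rewrite eq_sym subr_eq addrC -h.
rewrite -[LHS](divfK ZZ0) h' hpq -mulr_natr -natr1.
have hq' : p%:R + 1 != 0 :> C by rewrite natr1 -hpq.
by field.
Qed.

Lemma ZZr : ZZ^* = ZZ.
Proof. by rewrite /ZZ -rdotC. Qed.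

Lemma colH k l : \sum_i (H i k)^* * H i l = q%:R * ((k==l)%:R - (Z 0 k)^* * Z 0 l / ZZ).
Proof.
rewrite complE -mulr_suml addrK mulrC divfK //.
Qed.

Lemma normcol k l : `|rdot (col k H)^T (col l H)^T| ^+ 2 = if k == l then (q%:R - 1)^+2 else 1.
Proof.
have e1 : rdot (col k H)^T (col l H)^T = \sum_i (H i l)^* * H i k.
  by rewrite /rdot; apply: eq_bigr => i _; rewrite !mxE mulrC.
have e2 : (rdot (col k H)^T (col l H)^T)^* = \sum_i (H i k)^* * H i l.
  rewrite e1 rmorph_sum; apply: eq_bigr => i _.
  by rewrite rmorphM /= conjCK mulrC.
rewrite normCK e2 e1 !colH eq_sym.
case: eqP => [<-|_].
  rewrite Zabs.
  rewrite (_ : true%:R = 1) //. by field; rewrite ZZ0 hq.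
transitivity (q%:R^+2 * (((Z 0 k)^* * Z 0 k) * ((Z 0 l)^* * Z 0 l)) / ZZ^+2).
  by rewrite (_ : false%:R = 0) //; field; rewrite ZZ0.
rewrite !Zabs.
by field; rewrite ZZ0 hq.
Qed.

Lemma HDH : H *m diag_mx (\row_l (`|Z 0 l| ^+ 2)) *m adj H = ZZ%:M.
Proof.
apply/matrixP=> i j; rewrite mul_mx_diag !mxE.
rewrite (eq_bigr (fun l => ZZ / q%:R * (H i l * (H j l)^*))); last first.
  move=> l _; rewrite !mxE normCK [Z 0 l * _]mulrC Zabs; ring.
rewrite -mulr_sumr.
have := rdotRR i j; rewrite /rdot (eq_bigr (fun l => H i l * (H j l)^*)); last by move=> l _; rewrite !mxE.
move=> ->.
case: eqP => _ /=; first by rewrite mul1r divfK.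
by rewrite !mul0r mulr0.
Qed.
End Compl.

Definition Kr (C : numClosedFieldType) n (H : 'M[C]_(n.+1, n.+2)) (W : 'rV[C]_(n.+2)) (i : 'I_(n.+2)) : 'rV[C]_(n.+2) :=
  match unlift ord_max i with Some j => row j H | None => W end.
Arguments Kr {C n}.

Lemma widen_lift n (i : 'I_n.+1) (h : (n.+1 <= n.+2)%N) : widen_ord h i = lift ord_max i.
Proof. by apply: val_inj; rewrite /= /bump leqNgt ltn_ord. Qed.

Theorem proposition3p7 (R : realType) (N : nat) (HN : (2 <= N)%N)
  (H : 'M[R[i]]_(N.-1, N)) (Z : 'rV[R[i]]_N) :
  partial_hadamard H ->
  Z != 0 ->
  (forall v : 'rV[R[i]]_N,
     (forall w : 'rV[R[i]]_N, (w <= H)%MS -> rdot w v = 0) <->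
     exists c : R[i], v = c *: Z) ->
  let P := fun i j : 'I_N.-1 => Proj (rdiv (row i H) (row j H)) in
  let G : 'M[R[i]]_N :=
    \matrix_(k, l) ((N%:R)^-1 * `|rdot (col k H)^T (col l H)^T| ^+ 2) in
  let D : 'M[R[i]]_N := diag_mx (\row_l (`|Z 0 l| ^+ 2)) in
  [/\ (exists Q : 'I_N -> 'I_N -> 'M[R[i]]_N,
          magic Q /\
          forall i j : 'I_N.-1,
            Q (widen_ord (leq_pred N) i) (widen_ord (leq_pred N) j) = P i j)
        <-> is_oproj (G - (N - 2)%:R *: 1%:M),
      is_oproj (G - (N - 2)%:R *: 1%:M)
        <-> (exists c : R[i], H *m D *m adj H = c%:M)
    & (exists c : R[i], H *m D *m adj H = c%:M)
        <-> (exists Q : 'I_N -> 'I_N -> 'M[R[i]]_N,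
          magic Q /\
          forall i j : 'I_N.-1,
            Q (widen_ord (leq_pred N) i) (widen_ord (leq_pred N) j) = P i j)].
Proof.
case: N HN H Z => [|[|n]] // _ H Z [hU hO] Zn0 hZ P G D.
have hq : (n.+2)%:R != 0 :> R[i] by rewrite pnatr_eq0.
have hpq : n.+2 = n.+2 by [].
have C3 : exists c : R[i], H *m D *m adj H = c%:M.
  by exists (rdot Z Z); rewrite /D HDH.
have C2 : is_oproj (G - (n.+2 - 2)%:R *: 1%:M).
  have -> : G - (n.+2 - 2)%:R *: 1%:M = \matrix_(k, l) (n.+2)%:R^-1.
    apply/matrixP=> k l; rewrite !mxE (@normcol _ _ _ H Z) //.
    rewrite !subSS subn0.
    case: eqP => _.
      have e : (n.+2)%:R = n%:R + 2 :> R[i] by rewrite -addn2 natrD.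
      rewrite (_ : true%:R = 1) // mulr1 e.
      have h2 : n%:R + 2 != 0 :> R[i] by rewrite -e.
      by field.
    by rewrite (_ : false%:R = 0) // mulr0 mulr1 subr0.
  split.
    apply/matrixP=> k l; rewrite !mxE (eq_bigr (fun _ => (n.+2)%:R^-1 * (n.+2)%:R^-1)).
      by rewrite sumr_const card_ord; field; rewrite -natrD pnatr_eq0.
    by move=> j _; rewrite !mxE.
  by apply/matrixP=> k l; rewrite !mxE fmorphV /= conjC_nat.
have C1 : exists Q : 'I_n.+2 -> 'I_n.+2 -> 'M[R[i]]_n.+2,
          magic Q /\
          forall i j : 'I_n.+1,
            Q (widen_ord (leq_pred n.+2) i) (widen_ord (leq_pred n.+2) j) = P i j.
  have Zab : forall k, (Z 0 k)^* * Z 0 k = rdot Z Z / (n.+2)%:R.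
    by move=> k; apply: (@Zabs _ _ _ H Z).
  have cH : forall k l, \sum_i (H i k)^* * H i l = (n.+2)%:R * ((k==l)%:R - (Z 0 k)^* * Z 0 l / rdot Z Z).
    by move=> k l; apply: (@colH _ _ _ H Z).
  have RZ : forall i, rdot (row i H) Z = 0 by move=> i; apply: (@rdotRZ _ _ _ H Z).
  have ZZn0 : rdot Z Z != 0 by apply: (@ZZ0 _ _ Z).
  have Z0n : Z 0 ord0 != 0.
    apply/eqP=> h; move: (Zab ord0); rewrite h conjC0 mul0r => /esym/eqP.
    by rewrite mulf_eq0 invr_eq0 (negPf ZZn0) (negPf hq).
  have Z0n' : (Z 0 ord0)^* != 0 by rewrite conjC_eq0.
  pose W := (Z 0 ord0)^-1 *: Z.
  pose K := Kr H W.
  have F1 : forall i l, K i 0 l * (K i 0 l)^* = 1.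
    move=> i l; rewrite /K /Kr; case: unliftP => [j _|_]; rewrite !mxE.
      by rewrite -normCK hU expr1n.
    rewrite rmorphM fmorphV /=.
    rewrite (_ : (Z 0 ord0)^-1 * Z 0 l * ((Z 0 ord0)^*^-1 * (Z 0 l)^*) = (Z 0 l)^* * Z 0 l / ((Z 0 ord0)^* * Z 0 ord0)).
      by rewrite !Zab divff // mulf_neq0 // invr_eq0.
    by field; rewrite Z0n Z0n'.
  have F2 : forall i j, i != j -> rdot (K i) (K j) = 0.
    move=> i j; rewrite /K /Kr.
    case: unliftP => [a ->|->]; case: unliftP => [b ->|->] ij.
    - by apply: hO; apply: contra_neq ij => ->.
    - by rewrite /W rdotZr RZ mulr0.
    - by rewrite /W rdotZl rdotC RZ conjC0 mulr0.
    - by rewrite eqxx in ij.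
  have F3 : forall k l, \sum_i (K i 0 k)^* * K i 0 l = (k==l)%:R * (n.+2)%:R.
    move=> k l; rewrite big_ord_recr /=.
    rewrite (eq_bigr (fun i => (H i k)^* * H i l)); last first.
      by move=> i _; rewrite /K /Kr widen_lift liftK !mxE.
    rewrite cH /K /Kr unlift_none !mxE rmorphM fmorphV /=.
    rewrite (_ : (Z 0 ord0)^*^-1 * (Z 0 k)^* * ((Z 0 ord0)^-1 * Z 0 l) = (Z 0 k)^* * Z 0 l / ((Z 0 ord0)^* * Z 0 ord0)); last first.
      by field; rewrite Z0n Z0n'.
    rewrite Zab.
    set d := ((k == l)%:R : R[i]).
    by field; rewrite ZZn0 -natrD pnatr_eq0.
  exists (@PK _ _ K); split; first by apply: PK_magic.
  move=> i j; rewrite /PK !widen_lift /K /Kr !liftK.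
  by [].
by split; split.
Qed.
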